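(* Consider a flow traversing a path $\mathbb{L}=\{1,\dots,N\}$ (a cascade) of wireless fading channels, where link $n$ has SNR-domain service process $\mathcal{S}_n(\tau,t)=\prod_{i=\tau}^{t-1} g(\gamma_{i,n})$ with stationary independent increments $g(\gamma_n)$, the links being mutually independent. The service at each node is shared by the through-flow and an independent cross-flow with SNR-domain arrival process $\mathcal{A}_c(\tau,t)=e^{k_c(t-\tau)}$ (constant rate $k_c$ bits per slot). Let $\mathcal{S}_c^{\mathbb{L}}(\tau,t)$ denote the end-to-end leftover service provided to the through-flow along $\mathbb{L}$, and $\mathcal{M}_{\mathcal{S}_c}^{\mathbb{L}}(s,\tau,t)$ its Mellin transform. Then for all $s<1$ and any $m\in\{1,\dots,N-1\}$, $$\mathcal{M}_{\mathcal{S}_c}^{\mathbb{L}}(s,\tau,t)\le \frac{\mathcal{M}_{g(\gamma_N)}(s)}{\mathcal{M}_{g(\gamma_N)}(s)-\mathcal{M}_{g(\gamma_m)}(s)}\,\mathcal{M}_{\mathcal{S}_c}^{\mathbb{L}\setminus\{m\}}(s,\tau,t)+\frac{\mathcal{M}_{g(\gamma_m)}(s)}{\mathcal{M}_{g(\gamma_m)}(s)-\mathcal{M}_{g(\gamma_N)}(s)}\,\mathcal{M}_{\mathcal{S}_c}^{\mathbb{L}\setminus\{N\}}(s,\tau,t),$$ where for a single link $\mathcal{M}_{\mathcal{S}_c}^{\{1\}}(s,\tau,t)=\left(e^{k_c(1-s)}\,\mathcal{M}_{g(\gamma_1)}(s)\right)^{t-\tau}$.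
   Context: Quantities in the SNR domain are exponentials of bit-domain quantities: if $S(\tau,t)$ is the cumulative number of bits served in slots $[\tau,t)$, then $\mathcal{S}(\tau,t)=e^{S(\tau,t)}$; the per-slot service increment is $g(\gamma)=e^{s_i}$ where $s_i$ is the bits served in slot $i$. For a nonnegative random variable $X$, the Mellin transform is $\mathcal{M}_X(s)=\mathbb{E}[X^{s-1}]$, and for a bivariate process $\mathcal{M}_{\mathcal{X}}(s,\tau,t)=\mathbb{E}[\mathcal{X}(\tau,t)^{s-1}]$. The leftover service at a single link is $\mathcal{S}(\tau,t)/\mathcal{A}_c(\tau,t)$. The end-to-end service of a path is the $(\min,\times)$ convolution of the per-link services, $\mathcal{S}_1\otimes\mathcal{S}_2(\tau,t)=\inf_{\tau\le i\le t}\{\mathcal{S}_1(\tau,i)\mathcal{S}_2(i,t)\}$, iterated over the links; the end-to-end leftover service is the analogous convolution of per-link leftover services. The through-flow arrivals, cross-traffic arrivals and link service processes are all independent. Time is slotted. *)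

(* Defs.v *)
From HB Require Import structures.
From mathcomp Require Import all_boot all_order all_algebra.
From mathcomp Require Import all_classical all_reals all_analysis.
Set Implicit Arguments. Unset Strict Implicit. Unset Printing Implicit Defensive.
Import Order.TTheory GRing.Theory Num.Theory.
Local Open Scope classical_set_scope.
Local Open Scope ring_scope.

Definition mutually_independent d (Omega : measurableType d) (R : realType)
  (P : probability Omega R) (I : eqType) (X : I -> Omega -> R) : Prop :=
  (forall i, measurable_fun setT (X i)) /\
  forall (J : seq I) (B : I -> set R), uniq J -> (forall i, measurable (B i)) ->
    P (\big[setI/setT]_(i <- J) (X i @^-1` B i)) =
    (\prod_(i <- J) P (X i @^-1` B i))%E.

Definition mellin d (Omega : measurableType d) (R : realType)
  (P : probability Omega R) (X : Omega -> R) (s : R) : \bar R :=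
  (\int[P]_w ((X w) `^ (s - 1))%:E)%E.

(* Per-slot service increments g(gamma_{i,n}) : slot i (nat), link n.
   SNR-domain service of link n over [tau,t):  prod_{i=tau}^{t-1} g i n. *)
Definition link_service (R : realType) (Omega : Type) (L : Type)
  (g : nat -> L -> Omega -> R) (n : L) (tau t : nat) (w : Omega) : R :=
  \prod_(tau <= i < t) g i n w.

(* Leftover service at link n with constant-rate cross traffic
   A_c(tau,t) = exp(kc (t - tau)):  S_n(tau,t) / A_c(tau,t). *)
Definition leftover_service (R : realType) (Omega : Type) (L : Type)
  (g : nat -> L -> Omega -> R) (kc : R) (n : L) (tau t : nat) (w : Omega) : R :=
  link_service g n tau t w / expR (kc * (t - tau)%:R).

Definition minx_conv (R : realType) (S1 S2 : nat -> nat -> R) (tau t : nat) : R :=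
  \big[Num.min/ S1 tau tau * S2 tau t]_(tau <= i < t.+1) (S1 tau i * S2 i t).

(* End-to-end leftover service along a (nonempty) path, links in path order:
   S_{l1} (x) (S_{l2} (x) ( ... (x) S_{lk})). The empty path is never used. *)
Fixpoint path_leftover (R : realType) (Omega : Type) (L : Type)
  (g : nat -> L -> Omega -> R) (kc : R) (p : seq L) (w : Omega)
  : nat -> nat -> R :=
  match p with
  | [::] => fun _ _ => 1
  | [:: n] => fun tau t => leftover_service g kc n tau t w
  | n :: p' => minx_conv (fun tau t => leftover_service g kc n tau t w)
                         (path_leftover g kc p' w)
  end.

(* The paper's recursively defined bound on the Mellin transform of the
   end-to-end leftover service of a path whose links have per-link values
   a_n = exp(kc(1-s)) M_{g(gamma_n)}(s): base case a^T for one link; the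
   recursion of Theorem 3 is solved by the sum over all ways of splitting
   the T = t - tau slots among the links,  sum_{l_1+...+l_k = T} prod a_j^{l_j}. *)
Fixpoint split_sum (R : realType) (a : seq R) (T : nat) : R :=
  match a with
  | [::] => (T == 0%N)%:R
  | x :: a' => \sum_(l < T.+1) x ^+ l * split_sum a' (T - l)
  end.

(* Main.v *)
From HB Require Import structures.
From mathcomp Require Import all_boot all_order all_algebra.
From mathcomp Require Import all_classical all_reals all_analysis.
Import Order.TTheory GRing.Theory Num.Theory.
From mathcomp Require Import ring lra zify.
Import measurable_realfun.
Require Import Defs.
Local Open Scope classical_set_scope.
Local Open Scope ring_scope.

Section onestep.
Context d (Omega : measurableType d) (R : realType) (P : probability Omega R).
Local Open Scope ereal_scope.
Import HBNNSimple.

Lemma simple_expand (f : {nnsfun R >-> R}) (X W : Omega -> R) :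
  measurable_fun setT X -> measurable_fun setT W -> (forall w, (0 <= W w)%R) ->
  \int[P]_w (f (X w) * W w)%:E =
  \sum_(r <- finmap.enum_fset (fset_set (range f)))
     r%:E * \int[P]_w (\1_(f @^-1` [set r]) (X w) * W w)%:E.
Proof.
move=> mX mW W0.
have fin := fimfunP f.
have mpre r : measurable (f @^-1` [set r]).
  by rewrite -[f @^-1` _]setTI; apply: measurable_funP1.
under eq_integral => w _.
  rewrite fimfunE fsbig_finite // big_distrl /= -sumEFin.
over.
rewrite ge0_integral_sum //; last first.
- move=> r w _; rewrite lee_fin; apply: mulr_ge0 => //.
  exact: nnfun_muleindic_ge0.
- move=> r; apply/measurable_EFinP; apply: measurable_funM => //.
  apply: measurable_funM => //.
  by apply: (measurableT_comp _ mX); exact: measurable_indic.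
rewrite big_seq [RHS]big_seq; apply: eq_bigr => r.
rewrite in_fset_set // inE => -[x _ <-].
rewrite -ge0_integralZl_EFin //; last first.
- apply/measurable_EFinP; apply: measurable_funM => //.
  by apply: (measurableT_comp _ mX); exact: measurable_indic.
- by move=> w _; rewrite lee_fin mulr_ge0 // indicE.
by apply: eq_integral => w _; rewrite -EFinM mulrA.
Qed.


Lemma mct_real (F : nat -> Omega -> R) (G : Omega -> R) :
  (forall k, measurable_fun setT (F k)) -> (forall k w, (0 <= F k w)%R) ->
  (forall w m n, (m <= n)%N -> (F m w <= F n w)%R) ->
  (forall w, (F k w)%:E @[k --> \oo] --> (G w)%:E) ->
  \int[P]_w (F k w)%:E @[k --> \oo] --> \int[P]_w (G w)%:E.
Proof.
move=> mF F0 nd cv.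
have -> : \int[P]_w (G w)%:E = \int[P]_w limn (fun k => (F k w)%:E).
  by apply: eq_integral => w _; apply/esym/cvg_lim.
apply: cvg_monotone_convergence => //.
- by move=> k; exact/measurable_EFinP.
- by move=> k w _; rewrite lee_fin.
- by move=> w _ m n mn; rewrite lee_fin; apply: nd.
Qed.

Lemma onestep (X Z : Omega -> R) (c : R) :
  measurable_fun setT X -> measurable_fun setT Z -> (forall w, (0 <= Z w)%R) ->
  \int[P]_w (Z w)%:E = c%:E ->
  (forall B, measurable B ->
     \int[P]_w (\1_B (X w) * Z w)%:E = P (X @^-1` B) * c%:E) ->
  forall h : R -> R, measurable_fun setT h -> (forall x, (0 <= h x)%R) ->
  \int[P]_w (h (X w) * Z w)%:E = \int[P]_w (h (X w))%:E * c%:E.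
Proof.
move=> mX mZ Z0 Zc hB h mh h0.
have mh' : measurable_fun setT (EFin \o h) by apply/measurable_EFinP.
pose f_ := nnsfun_approx measurableT mh'.
have cvf x : (f_ k x)%:E @[k --> \oo] --> (h x)%:E.
  exact: (@cvg_nnsfun_approx _ _ _ _ measurableT _ mh' (fun x _ => h0 x) x I).
have ndf x m n : (m <= n)%N -> (f_ m x <= f_ n x)%R.
  by move=> mn; exact/lefP/nd_nnsfun_approx.
have mf k : measurable_fun setT (f_ k) by [].
have mfX k : measurable_fun setT (fun w => f_ k (X w)).
  exact: (measurableT_comp (mf k) mX).
have key k : \int[P]_w (f_ k (X w) * Z w)%:E = \int[P]_w (f_ k (X w))%:E * c%:E.
  rewrite simple_expand //.
  transitivity (\int[P]_w (f_ k (X w) * cst 1%R w)%:E * c%:E); last first.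
    by congr (_ * _); apply: eq_integral => w _; rewrite /= mulr1.
  rewrite simple_expand //; try exact: measurable_cst; try by [].
  rewrite [in RHS]big_seq ge0_sume_distrl; last first.
    move=> r; rewrite in_fset_set; last exact: fimfunP.
    rewrite inE => -[x _ <-]; apply: mule_ge0; first by rewrite lee_fin.
    by apply: integral_ge0 => w _; rewrite lee_fin /= mulr1.
  rewrite [in LHS]big_seq; apply: eq_bigr => r _.
  rewrite -muleA; congr (_ * _).
  have mpre : measurable (f_ k @^-1` [set r]).
    by rewrite -[_ @^-1` _]setTI; apply: measurable_funP1.
  rewrite hB //.
  congr (_ * _); apply/esym.
  under eq_integral do rewrite /= mulr1.
  transitivity (\int[P]_w (\1_(X @^-1` (f_ k @^-1` [set r])) w)%:E).
    by apply: eq_integral => w _; rewrite !indicE.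
  rewrite integral_indic ?setIT //.
  by rewrite -[X @^-1` _]setTI; apply: mX.
have cv1 : \int[P]_w (f_ k (X w) * Z w)%:E @[k --> \oo] -->
           \int[P]_w (h (X w) * Z w)%:E.
  apply: mct_real.
  - by move=> k; apply: measurable_funM.
  - by move=> k w; apply: mulr_ge0.
  - by move=> w m n mn; apply: ler_wpM2r => //; apply: ndf.
  - move=> w; under eq_fun do rewrite EFinM.
    rewrite EFinM; apply: cvgeZr => //; exact: cvf.
have cv2 : \int[P]_w (f_ k (X w))%:E @[k --> \oo] --> \int[P]_w (h (X w))%:E.
  apply: mct_real => //.
  by move=> w m n mn; apply: ndf.
rewrite -(cvg_lim _ cv1) //.
under eq_fun do rewrite key.
rewrite limeMr //; last by apply/cvg_ex; eexists; exact: cv2.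
by rewrite (cvg_lim _ cv2).
Qed.

End onestep.

Section indep.
Context d (Omega : measurableType d) (R : realType) (P : probability Omega R).
Context (I : eqType) (X : I -> Omega -> R).
Hypothesis mX : forall i, measurable_fun setT (X i).
Hypothesis hind : forall (J : seq I) (B : I -> set R), uniq J ->
  (forall i, measurable (B i)) ->
    P (\big[setI/setT]_(i <- J) (X i @^-1` B i)) =
    (\prod_(i <- J) P (X i @^-1` B i))%E.
Local Open Scope ereal_scope.

Definition FG (G : seq I) (F : I -> R -> R) (B : I -> set R) j x : R :=
  if j \in G then F j x else \1_(B j) x.

Lemma prod_indic (J : seq I) (B : I -> set R) w :
  (\prod_(j <- J) \1_(B j) (X j w) =
   \1_(\big[setI/setT]_(j <- J) X j @^-1` B j) w :> R)%R.
Proof.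
elim: J => [|j J IH]; first by rewrite !big_nil indicT.
by rewrite !big_cons IH indicI /= [in RHS]indicE [in LHS]indicE.
Qed.

Lemma meas_bigcap (J : seq I) (B : I -> set R) : (forall i, measurable (B i)) ->
  measurable (\big[setI/setT]_(j <- J) X j @^-1` B j).
Proof.
move=> mB; apply: (big_ind (fun A => measurable A)) => //.
- exact: measurableI.
- by move=> j _; rewrite -[_ @^-1` _]setTI; apply: mX.
Qed.

Lemma fin_P (A : set Omega) : measurable A -> P A \is a fin_num.
Proof. by move=> mA; apply: fin_num_measure. Qed.

Variables (F : I -> R -> R).
Hypothesis mF : forall j, measurable_fun setT (F j).
Hypothesis F0 : forall j x, (0 <= F j x)%R.
Hypothesis Ffin : forall j, \int[P]_w (F j (X j w))%:E \is a fin_num.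

Lemma FG_meas G B j : (forall i, measurable (B i)) -> measurable_fun setT (FG G F B j).
Proof. by move=> mB; rewrite /FG; case: (j \in G) => //; exact: measurable_indic. Qed.

Lemma FG_ge0 G B j x : (0 <= FG G F B j x)%R.
Proof. by rewrite /FG; case: (j \in G) => //; rewrite indicE. Qed.

Lemma FG_fin G B j : (forall i, measurable (B i)) ->
  \int[P]_w (FG G F B j (X j w))%:E \is a fin_num.
Proof.
move=> mB; rewrite /FG; case: (j \in G) => //.
transitivity (P (X j @^-1` B j) \is a fin_num).
  congr (_ \is a fin_num).
  transitivity (\int[P]_w (\1_(X j @^-1` B j) w)%:E).
    by apply: eq_integral => w _; rewrite !indicE.
  by rewrite integral_indic ?setIT //; rewrite -[_ @^-1` _]setTI; apply: mX.
by apply: fin_P; rewrite -[_ @^-1` _]setTI; apply: mX.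
Qed.

Lemma prod_fine (J : seq I) (f : I -> \bar R) : (forall j, f j \is a fin_num) ->
  \prod_(j <- J) f j = (\prod_(j <- J) fine (f j))%:E.
Proof.
move=> ff; rewrite -prodEFin; apply: eq_bigr => j _; by rewrite fineK.
Qed.

Lemma indep_gen G : forall J B, uniq J -> (forall i, measurable (B i)) ->
  \int[P]_w (\prod_(j <- J) FG G F B j (X j w))%:E =
  \prod_(j <- J) \int[P]_w (FG G F B j (X j w))%:E.
Proof.
elim: G => [|g G IH] J B uJ mB.
  rewrite /FG.
  under eq_integral do rewrite prod_indic.
  rewrite integral_indic ?setIT //; last exact: meas_bigcap.
  etransitivity; first exact: (hind J B uJ mB).
  apply: eq_bigr => j _.
  transitivity (\int[P]_w (\1_(X j @^-1` B j) w)%:E).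
    by rewrite integral_indic ?setIT //; rewrite -[_ @^-1` _]setTI; apply: mX.
  by apply: eq_integral => w _; rewrite !indicE.
have [eqG|neqG] := boolP ((g \in G) || (g \notin J)).
  have E j : j \in J -> FG (g :: G) F B j = FG G F B j.
    move=> jJ; rewrite /FG in_cons; have [ejg|//] := eqVneq j g.
    rewrite ejg /=; case/orP: eqG => [->//|].
    by rewrite -ejg jJ.
  rewrite big_seq; under eq_integral do rewrite big_seq.
  under eq_integral do (under eq_bigr => j jJ do rewrite E //).
  under eq_bigr => j jJ do rewrite E //.
  by rewrite -big_seq -IH // ; under eq_integral do rewrite -big_seq.
move: neqG; rewrite negb_or negbK => /andP[gG gJ].
have pJ := perm_to_rem gJ.
set J' := rem g J.
have uJ' : uniq J' by apply: rem_uniq.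
have gJ' : g \notin J' by rewrite mem_rem_uniqF.
have E B1 j : j \in J' -> FG (g :: G) F B1 j = FG G F B1 j.
  move=> jJ; rewrite /FG in_cons; case: eqP => //= ejg.
  by move: gJ'; rewrite -ejg jJ.
have Eg B1 : FG (g :: G) F B1 g = F g by rewrite /FG mem_head.
rewrite (perm_big _ pJ) big_cons Eg.
under eq_integral do rewrite (perm_big _ pJ) big_cons Eg.
rewrite big_seq.
under eq_bigr => j jJ do rewrite E //.
under eq_integral do (rewrite big_seq; under eq_bigr => j jJ do rewrite E //).
rewrite -big_seq.
under eq_integral do rewrite -big_seq.
have mBu B0 : measurable B0 -> forall i, measurable (if i == g then B0 else B i).
  by move=> mB0 i; case: (i == g).
have EB B0 j : j \in J' -> FG G F (fun i => if i == g then B0 else B i) j = FG G F B j.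
  move=> jJ; rewrite /FG; case: (j \in G) => //.
  by case: eqP => // ejg; move: gJ'; rewrite -ejg jJ.
have IHJ' := IH J' B uJ' mB.
rewrite (prod_fine _ _ (fun j => FG_fin G B j mB)) in IHJ'.
rewrite (prod_fine _ _ (fun j => FG_fin G B j mB)).
set c := (\prod_(j <- J') fine (\int[P]_w (FG G F B j (X j w))%:E))%R.
suff key : \int[P]_w (F g (X g w) * \prod_(j <- J') FG G F B j (X j w))%:E =
   \int[P]_w (F g (X g w))%:E * c%:E by exact: key.
apply: (@onestep _ _ _ P (X g) (fun w => \prod_(j <- J') FG G F B j (X j w))%R) => //.
- apply: measurable_prod => j _.
  exact: (measurableT_comp (FG_meas G B j mB) (mX j)).
- by move=> w; apply: prodr_ge0 => j _; apply: FG_ge0.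
- move=> B0 mB0.
  have := IH J (fun i => if i == g then B0 else B i) uJ (mBu B0 mB0).
  rewrite (perm_big _ pJ) big_cons.
  under eq_integral do rewrite (perm_big _ pJ) big_cons.
  have EgB : FG G F (fun i => if i == g then B0 else B i) g = \1_B0.
    by rewrite /FG (negbTE gG) eqxx.
  rewrite EgB.
  rewrite big_seq; under eq_bigr => j jJ do rewrite EB //.
  under eq_integral do (rewrite big_seq; under eq_bigr => j jJ do rewrite EB //).
  rewrite -big_seq; under eq_integral do rewrite -big_seq.
  move=> ->; rewrite -IHJ'.
  rewrite (prod_fine _ _ (fun j => FG_fin G B j mB)).
  congr (_ * _).
  transitivity (\int[P]_w (\1_(X g @^-1` B0) w)%:E).
    by apply: eq_integral => w _; rewrite !indicE.
  by rewrite integral_indic ?setIT //; rewrite -[_ @^-1` _]setTI; apply: mX.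
by rewrite IHJ'.
Qed.

End indep.

Lemma intZ d (Omega : measurableType d) (R : realType) (P : probability Omega R)
  (f : Omega -> R) (c : R) : measurable_fun setT f -> (forall w, (0 <= f w)%R) ->
  (0 <= c)%R ->
  (\int[P]_w (c * f w)%:E = c%:E * \int[P]_w (f w)%:E)%E.
Proof.
move=> mf f0 c0; under eq_integral do rewrite EFinM.
rewrite ge0_integralZl_EFin //; first by move=> w _; rewrite lee_fin.
exact/measurable_EFinP.
Qed.

Lemma indep_prod d (Omega : measurableType d) (R : realType) (P : probability Omega R)
  (I : eqType) (X : I -> Omega -> R) (F : I -> R -> R) :
  mutually_independent P X ->
  (forall j, measurable_fun setT (F j)) -> (forall j x, (0 <= F j x)%R) ->
  (forall j, (\int[P]_w (F j (X j w))%:E)%E \is a fin_num) ->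
  forall J, uniq J ->
  (\int[P]_w (\prod_(j <- J) F j (X j w))%:E =
   \prod_(j <- J) \int[P]_w (F j (X j w))%:E)%E.
Proof.
move=> [mX hind] mF F0 Ffin J uJ.
have := @indep_gen _ _ _ P I X mX hind F mF F0 Ffin J J (fun=> setT) uJ (fun=> measurableT).
have E1 w : (\prod_(j <- J) FG _ _ J F (fun=> setT) j (X j w) = \prod_(j <- J) F j (X j w))%R.
  by apply: eq_big_seq => j jJ; rewrite /FG jJ.
have E2 : (\prod_(j <- J) \int[P]_w (FG _ _ J F (fun=> setT) j (X j w))%:E =
           \prod_(j <- J) \int[P]_w (F j (X j w))%:E)%E.
  by apply: eq_big_seq => j jJ; rewrite /FG jJ.
rewrite E2; under eq_integral do rewrite E1.
by [].
Qed.

Lemma le_sum_term (R : realDomainType) (T : nat) (F : 'I_T -> R) (k : 'I_T) :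
  (forall i, 0 <= F i) -> F k <= \sum_i F i.
Proof. by move=> F0; rewrite (bigD1 k) //= lerDl sumr_ge0. Qed.

Lemma powR_prod (R : realType) (r : R) (s0 : seq nat) (F : nat -> R) :
  (forall i, 0 <= F i) -> (\prod_(i <- s0) F i) `^ r = \prod_(i <- s0) (F i `^ r).
Proof.
move=> F0; elim: s0 => [|i s0 IH]; first by rewrite !big_nil powR1.
rewrite !big_cons powRM ?IH //; exact: prodr_ge0.
Qed.

Section model.
Context d (Omega : measurableType d) (R : realType) (P : probability Omega R).
Context (n : nat) (g : nat -> 'I_n.+1 -> Omega -> R) (kc s : R) (Mg : 'I_n.+1 -> R).
Hypothesis hMI : mutually_independent P (fun il : nat * 'I_n.+1 => g il.1 il.2).
Hypothesis gpos : forall i l w, 0 < g i l w.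
Hypothesis hMg : forall i l, (\int[P]_w ((g i l w) `^ (s-1))%:E)%E = (Mg l)%:E.

Let mg i l : measurable_fun setT (g i l).
Proof. by case: hMI => mX _; exact: (mX (i, l)). Qed.

Definition hh (x : R) := x `^ (s - 1).

Definition Lft l tau i w := (leftover_service g kc l tau i w) `^ (s - 1).

Lemma Lft_eq l tau k w : Lft l tau (tau + k) w =
  expR (kc * (1 - s)) ^+ k * \prod_(tau <= j < tau + k) hh (g j l w).
Proof.
rewrite /Lft /leftover_service /link_service addKn.
rewrite powRM; last 2 first.
- by apply: prodr_ge0 => j _; apply: ltW.
- by rewrite invr_ge0 ltW // expR_gt0.
rewrite powR_prod; last by move=> j; apply: ltW.
rewrite mulrC -expRN -expRM -expRM_natl; congr (expR _ * _).
by ring.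
Qed.

Fixpoint Bnd (p : seq 'I_n.+1) (tau t : nat) (w : Omega) : R :=
  match p with
  | [::] => (tau == t)%:R
  | l :: p' => \sum_(k < (t - tau).+1) Lft l tau (tau + k) w * Bnd p' (tau + k) t w
  end.


Lemma Bnd_cons l p tau t w : Bnd (l :: p) tau t w =
  \sum_(k < (t - tau).+1) Lft l tau (tau + k) w * Bnd p (tau + k) t w.
Proof. by []. Qed.

Lemma Bnd_ge0 p tau t w : 0 <= Bnd p tau t w.
Proof.
elim: p tau => [|l p IH] tau /=; first exact: ler0n.
by apply: sumr_ge0 => k _; apply: mulr_ge0 => //; apply: powR_ge0.
Qed.

Lemma mhh : measurable_fun setT hh.
Proof. exact: measurable_powR. Qed.

Lemma Lft_meas l tau k : measurable_fun setT (fun w => Lft l tau (tau + k) w).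
Proof.
rewrite (_ : (fun w => _) = fun w => expR (kc * (1 - s)) ^+ k *
   \prod_(tau <= j < tau + k) hh (g j l w)); last by apply/funext => w; rewrite Lft_eq.
apply: measurable_funM; first exact: measurable_cst.
apply: measurable_prod => j _; exact: (measurableT_comp mhh (mg j l)).
Qed.

Lemma Bnd_meas p tau t : measurable_fun setT (fun w => Bnd p tau t w).
Proof.
elim: p tau => [|l p IH] tau /=; first exact: measurable_cst.
apply: measurable_sum => k; apply: measurable_funM => //; exact: Lft_meas.
Qed.

Lemma prodK_meas (K : seq (nat * 'I_n.+1)) :
  measurable_fun setT (fun w => \prod_(k <- K) hh (g k.1 k.2 w)).
Proof. apply: measurable_prod => j _; exact: (measurableT_comp mhh (mg _ _)). Qed.

Lemma prodK_ge0 (K : seq (nat * 'I_n.+1)) w : 0 <= \prod_(k <- K) hh (g k.1 k.2 w).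
Proof. by apply: prodr_ge0 => k _; apply: powR_ge0. Qed.

Lemma K_int (K : seq (nat * 'I_n.+1)) : uniq K ->
  (\int[P]_w (\prod_(k <- K) hh (g k.1 k.2 w))%:E)%E = (\prod_(k <- K) Mg k.2)%:E.
Proof.
move=> uK.
have := @indep_prod _ _ _ P _ (fun il : nat * 'I_n.+1 => g il.1 il.2) (fun _ => hh) hMI
  (fun _ => mhh) (fun _ x => powR_ge0 x (s - 1)) _ K uK.
move=> ->; last by move=> j; rewrite /hh hMg.
by rewrite -prodEFin; apply: eq_bigr => k _; rewrite /hh hMg.
Qed.

Definition aa l := expR (kc * (1 - s)) * Mg l.

Lemma Bnd_int p : uniq p -> forall K tau t, uniq K ->
  (forall k, k \in K -> k.2 \notin p) -> (tau <= t)%N ->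
  (\int[P]_w ((\prod_(k <- K) hh (g k.1 k.2 w)) * Bnd p tau t w)%:E)%E =
  ((\prod_(k <- K) Mg k.2) * split_sum (map aa p) (t - tau))%:E.
Proof.
elim: p => [|l p IH] up K tau t uK Kp htau /=.
  under eq_integral do rewrite mulrC.
  rewrite intZ //; [|exact: prodK_meas|exact: prodK_ge0].
  rewrite K_int // -EFinM mulrC.
  by rewrite subn_eq0 eq_sym eqn_leq htau andbT.
move: up => /= /andP[lp up].
have Kp' k : k \in K -> k.2 \notin p.
  by move=> kK; have := Kp k kK; rewrite in_cons negb_or => /andP[].
have Kl k : k \in K -> k.2 != l.
  by move=> kK; have := Kp k kK; rewrite in_cons negb_or => /andP[].
under eq_integral do rewrite mulr_sumr -sumEFin.
rewrite ge0_integral_sum //; last 2 first.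
- move=> k; apply/measurable_EFinP; apply: measurable_funM; first exact: prodK_meas.
  apply: measurable_funM; [exact: Lft_meas | exact: Bnd_meas].
- move=> k w _; rewrite lee_fin; apply: mulr_ge0; first exact: prodK_ge0.
  by apply: mulr_ge0; [exact: powR_ge0 | exact: Bnd_ge0].
rewrite mulr_sumr -sumEFin; apply: eq_bigr => k _.
set K' := K ++ [seq (j, l) | j <- index_iota tau (tau + k)].
have hk : (tau + k <= t)%N.
  by have := ltn_ord k; lia.
have uK' : uniq K'.
  rewrite cat_uniq uK /=; apply/andP; split.
    apply/hasPn => x /mapP[j _ ->]; apply/negP => /Kl /=; by rewrite eqxx.
  rewrite map_inj_uniq ?iota_uniq //; by move=> a b [].
have K'p k0 : k0 \in K' -> k0.2 \notin p.
  rewrite mem_cat => /orP[/Kp'//|/mapP[j _ ->] /=]; exact: lp.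
have E w : (\prod_(k0 <- K) hh (g k0.1 k0.2 w) *
     (Lft l tau (tau + k) w * Bnd p (tau + k) t w) =
   expR (kc * (1 - s)) ^+ k *
     (\prod_(k0 <- K') hh (g k0.1 k0.2 w) * Bnd p (tau + k) t w))%R.
  rewrite Lft_eq /K' big_cat big_map /=.
  rewrite -/(index_iota tau (tau + k)).
  by rewrite !mulrA [X in X * _ * _](mulrC) -!mulrA.
under eq_integral do rewrite E.
rewrite intZ; last 3 first.
- apply: measurable_funM; [exact: prodK_meas | exact: Bnd_meas].
- by move=> w; rewrite mulr_ge0 ?prodK_ge0 ?Bnd_ge0.
- by rewrite exprn_ge0 // expR_ge0.
rewrite (IH up K' (tau + k) t uK' K'p hk) -EFinM; congr EFin.
rewrite /K' big_cat big_map /= -/(index_iota tau (tau + k)) prodr_const_nat addKn.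
rewrite /aa exprMn subnDA.
by ring.
Qed.


Lemma left_pos l tau t w : 0 < leftover_service g kc l tau t w.
Proof.
rewrite /leftover_service /link_service divr_gt0 ?expR_gt0 //.
by apply: prodr_gt0 => j _; apply: gpos.
Qed.

Lemma path_pos p tau t w : 0 < path_leftover g kc p w tau t.
Proof.
elim: p tau t => [|l p IH] tau t /=; first exact: ltr01.
case: p IH => [|m p] IH; first exact: left_pos.
rewrite /minx_conv; apply: (big_ind (fun v => 0 < v)).
- by apply: mulr_gt0; [exact: left_pos | exact: IH].
- by move=> x y x0 y0; rewrite lt_min x0 y0.
- by move=> i _; apply: mulr_gt0; [exact: left_pos | exact: IH].
Qed.

Lemma left_meas l tau t : measurable_fun setT (fun w => leftover_service g kc l tau t w).
Proof.
apply: measurable_funM; last exact: measurable_cst.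
by apply: measurable_prod => j _; exact: mg.
Qed.

Lemma meas_bigmin (s0 : seq nat) (F : nat -> Omega -> R) (x0 : Omega -> R) :
  measurable_fun setT x0 -> (forall i, measurable_fun setT (F i)) ->
  measurable_fun setT (fun w => \big[Num.min/x0 w]_(i <- s0) F i w).
Proof.
move=> m0 mF; elim: s0 => [|i s0 IH].
  by under eq_fun do rewrite big_nil.
under eq_fun do rewrite big_cons.
exact: measurable_minr.
Qed.

Lemma path_meas p tau t : measurable_fun setT (fun w => path_leftover g kc p w tau t).
Proof.
elim: p tau t => [|l p IH] tau t /=; first exact: measurable_cst.
case: p IH => [|m p] IH; first exact: left_meas.
rewrite /minx_conv; apply: meas_bigmin.
- by apply: measurable_funM; [exact: left_meas | exact: IH].
- by move=> i; apply: measurable_funM; [exact: left_meas | exact: IH].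
Qed.

Lemma path_le p tau t w : p != [::] -> (tau <= t)%N ->
  (path_leftover g kc p w tau t) `^ (s - 1) <= Bnd p tau t w.
Proof.
elim: p tau => [//|l p IH] tau _ htau.
case: p IH => [|m p] IH.
  rewrite /=.
  apply: le_trans (le_sum_term _ _ _ (Ordinal (ltnSn (t - tau))) _); last first.
    by move=> i; apply: mulr_ge0; [exact: powR_ge0 | exact: ler0n].
  by rewrite /= subnKC // eqxx mulr1.
set RHS := Bnd _ _ _ _.
have Hterm i : (tau <= i <= t)%N ->
  (leftover_service g kc l tau i w * path_leftover g kc (m :: p) w i t) `^ (s - 1) <= RHS.
  move=> /andP[hi1 hi2].
  have hk : (i - tau < (t - tau).+1)%N by lia.
  rewrite /RHS Bnd_cons.
  apply: le_trans (le_sum_term _ _ _ (Ordinal hk) _); last first.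
    by move=> k; apply: mulr_ge0; [exact: powR_ge0 | exact: Bnd_ge0].
  have e : (tau + Ordinal hk)%N = i by rewrite /= subnKC.
  rewrite e powRM; last 2 first.
  - exact: ltW (left_pos _ _ _ _).
  - exact: ltW (path_pos _ _ _ _).
  apply: ler_wpM2l; first exact: powR_ge0.
  exact: IH.
rewrite /= /minx_conv big_seq.
apply: (big_ind (fun v => v `^ (s - 1) <= RHS)).
- by apply: Hterm; rewrite leqnn htau.
- by move=> x y hx hy; rewrite minEle; case: ifP.
- by move=> i; rewrite mem_index_iota ltnS => hi; apply: Hterm.
Qed.


Lemma Bnd1 l tau t w : (tau <= t)%N -> Bnd [:: l] tau t w = Lft l tau t w.
Proof.
move=> htau; rewrite Bnd_cons big_ord_recr big1 ?add0r.
  by rewrite /= add0r subnKC // eqxx mulr1.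
move=> i _; rewrite /=.
have -> : (tau + i == t) = false by apply/negbTE/eqP; have := ltn_ord i; lia.
by rewrite mulr0.
Qed.

End model.

Section algebra.
Context (R : realType).

Lemma split_poly (a : seq R) M T : (T < M)%N ->
  split_sum a T = (\prod_(x <- a) \poly_(i < M) (x ^+ i))`_T.
Proof.
elim: a T => [|x a IH] T hT /=; first by rewrite big_nil coef1.
rewrite big_cons coefM; apply: eq_bigr => j _.
rewrite coef_poly IH; last by apply: leq_ltn_trans hT; exact: leq_subr.
by rewrite (leq_ltn_trans _ hT) // -ltnS.
Qed.

Lemma coefM_eq (p q1 q2 : {poly R}) T : (forall j, (j <= T)%N -> q1`_j = q2`_j) ->
  (p * q1)`_T = (p * q2)`_T.
Proof. by move=> H; rewrite !coefM; apply: eq_bigr => j _; rewrite H // leq_subr. Qed.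

Lemma geo (x y : R) M j : (j < M)%N ->
  ((y - x) *: (\poly_(i < M) (x ^+ i) * \poly_(i < M) (y ^+ i)))`_j =
  (y *: \poly_(i < M) (y ^+ i) - x *: \poly_(i < M) (x ^+ i))`_j.
Proof.
move=> hj.
rewrite coefZ coefB !coefZ coefM !coef_poly hj.
rewrite -(exprS y) -(exprS x) subrXX.
apply: f_equal.
apply: eq_bigr => k _.
rewrite !coef_poly.
have h1 : (k < M)%N by apply: leq_ltn_trans hj; rewrite -ltnS.
have h2 : (j - k < M)%N by apply: leq_ltn_trans hj; exact: leq_subr.
by rewrite h1 h2 mulrC.
Qed.
Lemma split_id n (a : 'I_n.+1 -> R) (m N : 'I_n.+1) T : m != N ->
  (a N - a m) * split_sum (map a (enum 'I_n.+1)) T =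
  a N * split_sum (map a [seq l <- enum 'I_n.+1 | l != m]) T -
  a m * split_sum (map a [seq l <- enum 'I_n.+1 | l != N]) T.
Proof.
move=> mN.
pose Q l := \poly_(i < T.+1) (a l ^+ i).
have conv (P0 : pred 'I_n.+1) :
    split_sum (map a [seq l <- enum 'I_n.+1 | P0 l]) T = (\prod_(l | P0 l) Q l)`_T.
  rewrite (split_poly _ T.+1) //.
  rewrite big_map big_filter.
  by rewrite big_enum_cond.
have conv' : split_sum (map a (enum 'I_n.+1)) T = (\prod_(l | predT l) Q l)`_T.
  by rewrite -conv filter_predT.
rewrite conv' !conv.
set rest := \prod_(l | (l != m) && (l != N)) Q l.
have E1 : \prod_(l | predT l) Q l = Q m * (Q N * rest).
  rewrite (bigD1 m) //; congr (_ * _).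
  rewrite (bigD1 N) /=; last by rewrite eq_sym.
  by congr (_ * _); apply: eq_bigl => l.
have E2 : \prod_(l | l != m) Q l = Q N * rest.
  rewrite (bigD1 N) /=; last by rewrite eq_sym.
  by congr (_ * _).
have E3 : \prod_(l | l != N) Q l = Q m * rest.
  rewrite (bigD1 m) //=; congr (_ * _).
  by apply: eq_bigl => l; rewrite andbC.
rewrite E1.
rewrite E2 E3.
have -> : Q m * (Q N * rest) = rest * (Q m * Q N) by rewrite mulrA mulrC.
rewrite -coefZ scalerAr.
rewrite (coefM_eq rest ((a N - a m) *: (Q m * Q N)) (a N *: Q N - a m *: Q m)); last first.
  move=> j hj.
  exact: (geo (a m) (a N) T.+1 j hj).
by rewrite mulrBr coefB -!scalerAr !coefZ ![rest * _]mulrC.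
Qed.
End algebra.

Lemma split1 (R : realType) (x : R) T : split_sum [:: x] T = x ^+ T.
Proof.
rewrite /= big_ord_recr big1 ?add0r.
  by rewrite /= add0r subnn eqxx mulr1.
move=> i _; have -> : (T - i == 0)%N = false by apply/negbTE; have := ltn_ord i; lia.
by rewrite mulr0.
Qed.

Lemma final_alg (R : realFieldType) (e MN Mm H X Y : R) : 0 < e -> Mm != MN ->
  (e * MN - e * Mm) * H = e * MN * X - e * Mm * Y ->
  H <= MN / (MN - Mm) * X + Mm / (Mm - MN) * Y.
Proof.
move=> e0 hne key.
have D : MN - Mm != 0 by rewrite subr_eq0 eq_sym.
have D' : Mm - MN != 0 by rewrite subr_eq0.
have e1 : e != 0 by rewrite gt_eqF.
have eH : H = (MN * X - Mm * Y) / (MN - Mm).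
  apply: (mulfI (mulf_neq0 e1 D)).
  transitivity ((e * MN - e * Mm) * H); first by ring.
  rewrite key; field; exact: D.
rewrite eH le_eqVlt; apply/orP; left; apply/eqP.
field.
by rewrite D D'.
Qed.

Theorem theorem3 (d : measure_display) (Omega : measurableType d) (R : realType)
  (P : probability Omega R) (n : nat) (g : nat -> 'I_n.+1 -> Omega -> R)
  (kc s : R) (tau t : nat) (m : 'I_n.+1) :
  mutually_independent P (fun il : nat * 'I_n.+1 => g il.1 il.2) ->
  (forall i l w, 0 < g i l w) ->
  (forall i l (B : set R), measurable B ->
     P (g i l @^-1` B) = P (g 0%N l @^-1` B)) ->
  (forall l, P.-integrable setT (fun w => ((g 0%N l w) `^ (s - 1))%:E)) ->
  0 <= kc -> s < 1 -> (tau <= t)%N -> m != ord_max ->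
  let Mg l := fine (mellin P (g 0%N l) s) in
  Mg m != Mg ord_max ->
  let a l := expR (kc * (1 - s)) * Mg l in
  let L := enum 'I_n.+1 in
  (forall l, mellin P (leftover_service g kc l tau t) s = ((a l) ^+ (t - tau))%:E)
  /\
  (mellin P (fun w => path_leftover g kc L w tau t) s <=
    (Mg ord_max / (Mg ord_max - Mg m)
       * split_sum (map a [seq l <- L | l != m]) (t - tau)
     + Mg m / (Mg m - Mg ord_max)
       * split_sum (map a [seq l <- L | l != ord_max]) (t - tau))%:E)%E.
Proof.
move=> hMI gpos hdist hint kc0 s1 htau mN Mg mMN a L.
have mg i l : measurable_fun setT (g i l) by case: hMI => mX _; exact: (mX (i, l)).
have mf : measurable_fun setT (fun y : R => (y `^ (s - 1))%:E).
  by apply: measurableT_comp; [exact: EFin_measurable | exact: measurable_powR].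
have f0 : {in setT, forall y : R, (0 <= (y `^ (s - 1))%:E)%E}.
  by move=> y _; rewrite lee_fin powR_ge0.
have hMg i l : (\int[P]_w ((g i l w) `^ (s - 1))%:E)%E = (Mg l)%:E.
  have E1 := ge0_integral_pushforward (mg i l) P measurableT mf f0.
  have E0 := ge0_integral_pushforward (mg 0%N l) P measurableT mf f0.
  rewrite preimage_setT in E1 E0.
  transitivity (\int[P]_w ((g 0%N l w) `^ (s - 1))%:E)%E; last first.
    by rewrite /Mg fineK //; exact: (integrable_fin_num measurableT (hint l)).
  etransitivity; first exact: (esym E1).
  etransitivity; last exact: E0.
  by apply: eq_measure_integral => A mA _; exact: hdist.
have uL : uniq L by exact: enum_uniq.
have nK (p : seq 'I_n.+1) : forall k : nat * 'I_n.+1, k \in [::] -> k.2 \notin p by [].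
split.
  move=> l.
  have := Bnd_int d Omega R P n g kc s Mg hMI gpos hMg [:: l] isT [::] tau t isT
    (nK _) htau.
  rewrite big_nil mul1r split1.
  under eq_integral do rewrite big_nil mul1r Bnd1 //.
  by move=> H; exact: H.
have part2 : (mellin P (fun w => path_leftover g kc L w tau t) s <=
    (split_sum (map a L) (t - tau))%:E)%E.
  have := Bnd_int d Omega R P n g kc s Mg hMI gpos hMg L uL [::] tau t isT
    (nK _) htau.
  rewrite big_nil mul1r.
  under eq_integral do rewrite big_nil mul1r.
  move=> H.
  apply: (@le_trans _ _ (\int[P]_w (Bnd d Omega R n g kc s L tau t w)%:E)%E); last first.
    by rewrite H lexx.
  apply: ge0_le_integral => //.
  - by move=> w _; rewrite lee_fin powR_ge0.
  - apply/measurable_EFinP; apply: (measurableT_comp (measurable_powR _)).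
    exact: (path_meas d Omega R P n g kc hMI).
  - apply/measurable_EFinP; exact: (Bnd_meas d Omega R P n g kc s hMI gpos).
  - move=> w _; rewrite lee_fin; apply: (path_le d Omega R n g kc s gpos) => //.
    by rewrite -size_eq0 size_enum_ord.
apply: le_trans part2 _; rewrite lee_fin.
have key := split_id R n a m ord_max (t - tau) mN.
exact: (final_alg _ _ _ _ _ _ _ (expR_gt0 (kc * (1 - s))) mMN key).
Qed.
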